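(* Let $s=\tfrac12$, $\lambda\in\mathbb{C}$ and $k\in\mathbb{Z}$. Every odd superderivation of $\mathfrak{L}^{1/2}_\lambda$ of degree $k+\tfrac12$ is inner; more precisely, it equals $\mathrm{ad}(aG_{k+1/2}+bH_{k+1/2})$ for some $a,b\in\mathbb{C}$.
   Context: For $s\in\{0,\tfrac12\}$ and $\lambda\in\mathbb{C}$, $\mathfrak{L}^s_\lambda$ is the complex Lie superalgebra with basis $\{L_m,I_m,G_p,H_p : m\in\mathbb{Z},\ p\in s+\mathbb{Z}\}$, even part spanned by the $L_m,I_m$, odd part spanned by the $G_p,H_p$, and brackets $[L_m,L_n]=(m-n)L_{m+n}$, $[L_m,I_n]=(m-n)I_{m+n}$, $[L_m,H_p]=(\tfrac m2-p)H_{m+p}$, $[L_m,G_p]=(\tfrac m2-p)G_{m+p}+\lambda(m+1)H_{m+p}$, $[I_m,G_p]=(m-2p)H_{m+p}$, $[G_p,G_q]=I_{p+q}$, plus those given by super-antisymmetry $[y,x]=-(-1)^{|x||y|}[x,y]$; all other brackets of basis elements are zero. $\mathfrak{L}_r$ ($r\in\tfrac12\mathbb{Z}$) is spanned by basis elements of index $r$. A superderivation of parity $a$ is a linear map $D$ shifting parity by $a$ with $D([x,y])=[D(x),y]+(-1)^{a|x|}[x,D(y)]$ for homogeneous $x,y$; it has degree $r$ if $D(\mathfrak{L}_q)\subset\mathfrak{L}_{q+r}$. $\mathrm{ad}\,x(y)=[x,y]$. *)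

(* Defs.v *)
From HB Require Import structures.
From mathcomp Require Import all_boot all_order all_algebra.
Set Implicit Arguments. Unset Strict Implicit. Unset Printing Implicit Defensive.
Import Order.TTheory GRing.Theory Num.Theory.
Local Open Scope ring_scope.

(* Basis labels of L^{1/2}_lambda.
   BL m = L_m, BI m = I_m  (m : int),
   BG n = G_{n+1/2}, BH n = H_{n+1/2}  (n : int), since p ranges over 1/2 + Z. *)
Inductive sbasis := BL of int | BI of int | BG of int | BH of int.

Definition sb_code (b : sbasis) : nat * int :=
  match b with BL m => (0%N, m) | BI m => (1%N, m) | BG n => (2%N, n) | BH n => (3%N, n) end.
Definition sb_decode (p : nat * int) : option sbasis :=
  match p with
  | (0%N, m) => Some (BL m) | (1%N, m) => Some (BI m)
  | (2%N, n) => Some (BG n) | (3%N, n) => Some (BH n) | _ => None end.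
Lemma sb_codeK : pcancel sb_code sb_decode. Proof. by case. Qed.
HB.instance Definition _ := Equality.copy sbasis (pcan_type sb_codeK).

Definition idx2 (b : sbasis) : int :=
  match b with BL m | BI m => 2 * m | BG n | BH n => 2 * n + 1 end.

Definition even_b (b : sbasis) : bool :=
  match b with BL _ | BI _ => true | _ => false end.
Definition odd_b (b : sbasis) : bool := ~~ even_b b.

(* With p = n + 1/2:
   m/2 - p = (m - 2n - 1)/2,  m - 2p = m - 2n - 1,  m + p = (m+n) + 1/2,
   p + q = n + n' + 1. *)
Definition half_bracket_table (F : fieldType) (V : lmodType F) (e : sbasis -> V)
    (lam : F) (x y : sbasis) : V :=
  match x, y with
  | BL m, BL n => (m - n)%:~R *: e (BL (m + n))
  | BL m, BI n => (m - n)%:~R *: e (BI (m + n))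
  | BI n, BL m => - ((m - n)%:~R *: e (BI (m + n)))
  | BL m, BH n => ((m - 2 * n - 1)%:~R / 2) *: e (BH (m + n))
  | BH n, BL m => - (((m - 2 * n - 1)%:~R / 2) *: e (BH (m + n)))
  | BL m, BG n => ((m - 2 * n - 1)%:~R / 2) *: e (BG (m + n))
                  + (lam * (m + 1)%:~R) *: e (BH (m + n))
  | BG n, BL m => - (((m - 2 * n - 1)%:~R / 2) *: e (BG (m + n))
                  + (lam * (m + 1)%:~R) *: e (BH (m + n)))
  | BI m, BG n => (m - 2 * n - 1)%:~R *: e (BH (m + n))
  | BG n, BI m => - ((m - 2 * n - 1)%:~R *: e (BH (m + n)))
  | BG n, BG n' => e (BI (n + n' + 1))
  | _, _ => 0
  end.

Definition inspan (F : fieldType) (V : lmodType F) (e : sbasis -> V)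
    (P : pred sbasis) (v : V) : Prop :=
  exists s : seq sbasis, exists c : sbasis -> F,
    all P s /\ v = \sum_(b <- s) c b *: e b.

Definition is_basis (F : fieldType) (V : lmodType F) (e : sbasis -> V) : Prop :=
  (forall v : V, inspan e predT v) /\
  (forall (s : seq sbasis) (c : sbasis -> F), uniq s ->
     \sum_(b <- s) c b *: e b = 0 -> forall b, b \in s -> c b = 0).

Record is_L_half (F : fieldType) (V : lmodType F) (brk : V -> V -> V)
    (e : sbasis -> V) (lam : F) : Prop := {
  Lh_basis : is_basis e;
  Lh_linl : forall (a : F) (u v w : V), brk (a *: u + v) w = a *: brk u w + brk v w;
  Lh_linr : forall (a : F) (u v w : V), brk w (a *: u + v) = a *: brk w u + brk w v;
  Lh_table : forall x y : sbasis, brk (e x) (e y) = half_bracket_table e lam x y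
}.

Definition even_el (F : fieldType) (V : lmodType F) (e : sbasis -> V) (v : V) :=
  inspan e even_b v.
Definition odd_el (F : fieldType) (V : lmodType F) (e : sbasis -> V) (v : V) :=
  inspan e odd_b v.
Definition homog (F : fieldType) (V : lmodType F) (e : sbasis -> V) (v : V) :=
  even_el e v \/ odd_el e v.
(* v in L_r where t = 2r *)
Definition in_grade (F : fieldType) (V : lmodType F) (e : sbasis -> V) (t : int) (v : V) :=
  inspan e (fun b => idx2 b == t) v.

(* D is an odd superderivation (parity a = 1) of degree k + 1/2:
   D is linear, shifts parity by 1, satisfies
   D[x,y] = [Dx,y] + (-1)^{|x|} [x,Dy] for homogeneous x, y,
   and maps L_q into L_{q + k + 1/2} (grades stored doubled). *)
Record odd_superder_deg (F : fieldType) (V : lmodType F) (brk : V -> V -> V)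
    (e : sbasis -> V) (D : V -> V) (k : int) : Prop := {
  osd_lin : forall (a : F) (u v : V), D (a *: u + v) = a *: D u + D v;
  osd_even : forall v, even_el e v -> odd_el e (D v);
  osd_odd : forall v, odd_el e v -> even_el e (D v);
  osd_der_even : forall x y, even_el e x -> homog e y ->
                   D (brk x y) = brk (D x) y + brk x (D y);
  osd_der_odd : forall x y, odd_el e x -> homog e y ->
                   D (brk x y) = brk (D x) y - brk x (D y);
  osd_deg : forall (t : int) (v : V), in_grade e t v -> in_grade e (t + (2 * k + 1)) (D v)
}.

(* Main.v *)
Require Import Defs.
From HB Require Import structures.
From mathcomp Require Import all_boot all_order all_algebra.
From mathcomp Require Import zify ring.
Import GRing.Theory Num.Theory.
Set Implicit Arguments. Unset Strict Implicit.
Local Open Scope ring_scope.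

Lemma lin0 (F : fieldType) (V : lmodType F) (f : V -> V) :
  (forall (a : F) u v, f (a *: u + v) = a *: f u + f v) -> f 0 = 0.
Proof.
move=> H; have := H 1 0 0; rewrite !scale1r addr0 => E0.
have E : f 0 + f 0 = f 0 + 0 by rewrite addr0 -E0.
exact: addrI E.
Qed.

Lemma linZ (F : fieldType) (V : lmodType F) (f : V -> V) :
  (forall (a : F) u v, f (a *: u + v) = a *: f u + f v) -> forall a u, f (a *: u) = a *: f u.
Proof. by move=> H a u; rewrite -[a *: u]addr0 H (lin0 H) addr0. Qed.

Lemma linD (F : fieldType) (V : lmodType F) (f : V -> V) :
  (forall (a : F) u v, f (a *: u + v) = a *: f u + f v) -> forall u v, f (u + v) = f u + f v.
Proof. by move=> H u v; rewrite -{1}[u]scale1r H scale1r. Qed.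

Lemma linsum (F : fieldType) (V : lmodType F) (f : V -> V) (e : sbasis -> V) :
  (forall (a : F) u v, f (a *: u + v) = a *: f u + f v) ->
  forall (s : seq sbasis) (c : sbasis -> F),
  f (\sum_(b <- s) c b *: e b) = \sum_(b <- s) c b *: f (e b).
Proof.
move=> H; elim=> [|b s IH] c; first by rewrite !big_nil (lin0 H).
by rewrite !big_cons H IH.
Qed.

Lemma in_grade_e (F : fieldType) (V : lmodType F) (e : sbasis -> V) b :
  in_grade e (idx2 b) (e b).
Proof.
exists [:: b], (fun _ => 1); split; first by rewrite /= eqxx.
by rewrite big_cons big_nil scale1r addr0.
Qed.

Lemma two_span (F : fieldType) (V : lmodType F) (e : sbasis -> V) (P : pred sbasis) u w v :
  (forall b, P b -> b = u \/ b = w) -> inspan e P v ->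
  exists x y : F, v = x *: e u + y *: e w.
Proof.
move=> HP [s [c [Hs Hv]]]; subst v; elim: s Hs => [|b s IH] /=.
  by move=> _; exists 0, 0; rewrite big_nil !scale0r addr0.
rewrite big_cons; case/andP=> Pb /IH [x [y ->]].
case: (HP b Pb) => ->.
  by exists (c u + x), y; rewrite scalerDl addrA.
by exists x, (c w + y); rewrite scalerDl addrCA.
Qed.

Lemma coef2 (F : fieldType) (V : lmodType F) (e : sbasis -> V) u w (X1 Y1 X2 Y2 : F) :
  is_basis e -> u != w ->
  X1 *: e u + Y1 *: e w = X2 *: e u + Y2 *: e w -> X1 = X2 /\ Y1 = Y2.
Proof.
move=> [_ Hind] uw H.
have H0 : (X1 - X2) *: e u + (Y1 - Y2) *: e w = 0.
  by rewrite !scalerBl addrACA -opprD H subrr.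
pose c b := if b == u then X1 - X2 else Y1 - Y2.
have Hs : \sum_(b <- [:: u; w]) c b *: e b = 0.
  by rewrite !big_cons big_nil addr0 /c eqxx eq_sym (negbTE uw).
have Hu := Hind _ c (_ : uniq [:: u; w]) Hs u.
have Hw := Hind _ c (_ : uniq [:: u; w]) Hs w.
have U : uniq [:: u; w] by rewrite /= inE uw.
move: (Hu U) (Hw U); rewrite /c eqxx eq_sym (negbTE uw) !inE !eqxx ?orbT.
by move=> /(_ isT) /eqP; rewrite subr_eq0 => /eqP -> /(_ isT) /eqP; rewrite subr_eq0 => /eqP ->.
Qed.

Lemma ext_odd (F : fieldType) (V : lmodType F) (e : sbasis -> V) N v :
  in_grade e (2*N+1) v -> exists x y : F, v = x *: e (BG N) + y *: e (BH N).
Proof. apply: two_span => -[m|m|m|m] /= /eqP H; try lia; (have -> : m = N by lia); by [left|right]. Qed.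

Lemma ext_even (F : fieldType) (V : lmodType F) (e : sbasis -> V) N v :
  in_grade e (2*N) v -> exists x y : F, v = x *: e (BL N) + y *: e (BI N).
Proof. apply: two_span => -[m|m|m|m] /= /eqP H; try lia; (have -> : m = N by lia); by [left|right]. Qed.

Definition phi (F : fieldType) (V : lmodType F) (e : sbasis -> V) u w (x y : F) :=
  x *: e u + y *: e w.

Lemma phiD (F : fieldType) (V : lmodType F) (e : sbasis -> V) u w (x1 y1 x2 y2 : F) :
  phi e u w x1 y1 + phi e u w x2 y2 = phi e u w (x1 + x2) (y1 + y2).
Proof. by rewrite /phi !scalerDl addrACA. Qed.
Lemma phiN (F : fieldType) (V : lmodType F) (e : sbasis -> V) u w (x y : F) :
  - phi e u w x y = phi e u w (- x) (- y).
Proof. by rewrite /phi opprD !scaleNr. Qed.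
Lemma phiZ (F : fieldType) (V : lmodType F) (e : sbasis -> V) u w (c x y : F) :
  c *: phi e u w x y = phi e u w (c * x) (c * y).
Proof. by rewrite /phi scalerDr !scalerA. Qed.
Lemma phiu (F : fieldType) (V : lmodType F) (e : sbasis -> V) u w :
  e u = phi e u w (1 : F) 0.
Proof. by rewrite /phi scale1r scale0r addr0. Qed.
Lemma phiw (F : fieldType) (V : lmodType F) (e : sbasis -> V) u w :
  e w = phi e u w (0 : F) 1.
Proof. by rewrite /phi scale1r scale0r add0r. Qed.
Lemma phi0 (F : fieldType) (V : lmodType F) (e : sbasis -> V) u w :
  0 = phi e u w (0 : F) 0.
Proof. by rewrite /phi !scale0r addr0. Qed.
Lemma phiE (F : fieldType) (V : lmodType F) (e : sbasis -> V) u w (x y : F) :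
  x *: e u + y *: e w = phi e u w x y.
Proof. by []. Qed.

Lemma phi_inj (F : fieldType) (V : lmodType F) (e : sbasis -> V) u w (X1 Y1 X2 Y2 : F) :
  is_basis e -> u != w ->
  phi e u w X1 Y1 = phi e u w X2 Y2 -> X1 = X2 /\ Y1 = Y2.
Proof. exact: coef2. Qed.

Lemma solve (F : fieldType) (x X L R c : F) :
  c != 0 -> L = R -> c * (x - X) = L - R -> x = X.
Proof.
move=> Hc -> H; apply/eqP; rewrite -subr_eq0; apply/eqP.
by move: H; rewrite subrr => /eqP; rewrite mulf_eq0 (negbTE Hc) => /eqP.
Qed.

Theorem lemma2p8 (F : numClosedFieldType) (V : lmodType F) (brk : V -> V -> V)
    (e : sbasis -> V) (lam : F) (k : int) (D : V -> V) :
  is_L_half brk e lam -> odd_superder_deg brk e D k ->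
  exists a b : F, forall v : V, D v = brk (a *: e (BG k) + b *: e (BH k)) v.
Proof.
case=> Hb Hll Hlr Ht [Dlin _ _ Dev _ Ddeg].
have Lb0 : even_el e (e (BL 0)).
  exists [:: BL 0], (fun _ => 1); split => //.
  by rewrite big_cons big_nil scale1r addr0.
have homog_e y : homog e (e y).
  have Hy : inspan e (pred1 y) (e y).
    exists [:: y], (fun _ => 1); split; first by rewrite /= eqxx.
    by rewrite big_cons big_nil scale1r addr0.
  case: y Hy => m [s [c [Hs Hv]]]; [left|left|right|right]; exists s, c;
   (split => //; apply: sub_all Hs => b /eqP -> //).
have der y := Dev (e (BL 0)) (e y) Lb0 (homog_e y).
have DZ := linZ Dlin. have DD := linD Dlin.
have BZl w := linZ (fun a u v => Hll a u v w).
have BDl w := linD (fun a u v => Hll a u v w).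
have BZr w := linZ (fun a u v => Hlr a u v w).
have BDr w := linD (fun a u v => Hlr a u v w).
have DL m : exists x y, D (e (BL m)) = x *: e (BG (m+k)) + y *: e (BH (m+k)).
  apply: ext_odd; have := Ddeg _ _ (in_grade_e e (BL m)).
  by rewrite /= (_ : 2 * m + (2 * k+1) = 2*(m+k)+1) //; lia.
have DI m : exists x y, D (e (BI m)) = x *: e (BG (m+k)) + y *: e (BH (m+k)).
  apply: ext_odd; have := Ddeg _ _ (in_grade_e e (BI m)).
  by rewrite /= (_ : 2 * m + (2 * k+1) = 2*(m+k)+1) //; lia.
have DG n : exists x y, D (e (BG n)) = x *: e (BL (n+k+1)) + y *: e (BI (n+k+1)).
  apply: ext_even; have := Ddeg _ _ (in_grade_e e (BG n)).
  by rewrite /= (_ : 2 * n + 1 + (2 * k+1) = 2*(n+k+1)) //; lia.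
have DH n : exists x y, D (e (BH n)) = x *: e (BL (n+k+1)) + y *: e (BI (n+k+1)).
  apply: ext_even; have := Ddeg _ _ (in_grade_e e (BH n)).
  by rewrite /= (_ : 2 * n + 1 + (2 * k+1) = 2*(n+k+1)) //; lia.
have [a0 [b0 E0]] := DL 0; rewrite add0r in E0.
have i1 : ((1:int)%:~R : F) = 1 by [].
have i2 : ((2:int)%:~R : F) = 2 by [].
have HK : (2 * k%:~R + 1 : F) != 0.
  by rewrite (_ : 2 * k%:~R + 1 = (2 * k + 1)%:~R) ?intr_eq0 ?intrD ?intrM //; lia.
have HK2 : ((2 * k%:~R + 1) / 2 : F) != 0 by rewrite mulf_neq0 // invr_eq0 pnatr_eq0.
have DH0 n : D (e (BH n)) = 0.
  have [x [y Ex]] := DH n.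
  have E := der (BH n).
  rewrite Ht /= !add0r DZ Ex E0 BDl !BZl !BDr !BZr !Ht /= !add0r ?scaler0 ?addr0 ?add0r in E.
  rewrite ?(phiu e (BL (n+k+1)) (BI (n+k+1))) ?(phiw e (BL (n+k+1)) (BI (n+k+1))) in E.
  rewrite !(phiN, phiZ, phiD) in E.
  have [//|E1 E2] := @phi_inj _ _ e _ _ _ _ _ _ Hb _ E.
  rewrite ?(intrD, intrN, intrM, i1, i2) in E1 E2.
  have Ex' : x = 0 by apply: (solve HK2 E1); field.
  have Ey' : y = 0 by apply: (solve HK2 E2); field.
  by rewrite Ex Ex' Ey' !scale0r addr0.
have [a Ha] : exists a : F, a = 2 * a0 / (2 * k%:~R + 1) by eexists.
have [b Hb'] : exists b : F, b = 2 * (b0 + a * lam) / (2 * k%:~R + 1) by eexists.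
exists a, b => v.
have [s [c [_ ->]]] := Hb.1 v.
rewrite (linsum e Dlin) (linsum e (fun a u v => Hlr a u v _)).
apply: eq_bigr => y _; congr (_ *: _).
case: y => n.
- have [x [y Ex]] := DL n.
  have E := der (BL n).
  rewrite Ht /= !add0r DZ E0 Ex BDl !BZl !BDr !BZr !Ht /= !add0r in E.
  rewrite Ex BDl !BZl !Ht /=.
  rewrite !(phiu e (BG (n+k)) (BH (n+k))) !(phiw e (BG (n+k)) (BH (n+k))) in E *.
  rewrite !(phiN, phiZ, phiD) in E *.
  have [//|E1 E2] := @phi_inj _ _ e _ _ _ _ _ _ Hb _ E.
  rewrite ?(intrD, intrN, intrM, i1, i2) in E1 E2 *.
  have Ex' : x = - a * (n%:~R - 2 * k%:~R - 1) / 2.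
    by apply: (solve HK2 E1); rewrite Ha; field.
  have Ey' : y = - (a * lam * (n%:~R + 1) + b * (n%:~R - 2 * k%:~R - 1) / 2).
    by apply: (solve HK2 E2); rewrite Ex' Hb' Ha; field.
  by rewrite Ex' Ey'; congr phi; ring.
- have [x [y Ex]] := DI n.
  have E := der (BI n).
  rewrite Ht /= !add0r DZ E0 Ex BDl !BZl !BDr !BZr !Ht /= !add0r ?scaler0 ?addr0 ?add0r in E.
  rewrite Ex BDl !BZl !Ht /= ?scaler0 ?addr0.
  rewrite ?(phiu e (BG (n+k)) (BH (n+k))) ?(phiw e (BG (n+k)) (BH (n+k))) in E *.
  rewrite !(phiN, phiZ, phiD) in E *.
  have [//|E1 E2] := @phi_inj _ _ e _ _ _ _ _ _ Hb _ E.
  rewrite ?(intrD, intrN, intrM, i1, i2) in E1 E2 *.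
  have Ex' : x = 0 by apply: (solve HK2 E1); field.
  have Ey' : y = - a * (n%:~R - 2 * k%:~R - 1).
    by apply: (solve HK2 E2); rewrite Ex' Ha; field.
  by rewrite Ex' Ey'; congr phi; ring.
- have [x [y Ex]] := DG n.
  have E := der (BG n).
  rewrite Ht /= !add0r DD !DZ E0 Ex DH0 BDl !BZl !BDr !BZr !Ht /= !add0r ?scaler0 ?addr0 ?add0r (addrC k n) in E.
  rewrite Ex BDl !BZl !Ht /= ?scaler0 ?addr0 (addrC k n).
  rewrite ?(phiu e (BL (n+k+1)) (BI (n+k+1))) ?(phiw e (BL (n+k+1)) (BI (n+k+1))) in E *.
  rewrite !(phiN, phiZ, phiD) in E *.
  have [//|E1 E2] := @phi_inj _ _ e _ _ _ _ _ _ Hb _ E.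
  rewrite ?(intrD, intrN, intrM, i1, i2) in E1 E2 *.
  have Ex' : x = 0 by apply: (solve HK2 E1); field.
  have Ey' : y = a.
    by apply: (solve HK2 E2); rewrite Ex' Ha; field.
  by rewrite Ex' Ey'; congr phi; ring.
- rewrite DH0 BDl !BZl !Ht /= !scaler0 addr0 //.
Qed.
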